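(* Let $p$ be a prime, $k>0$ an integer, and $G_{p,k}=C_{p^\infty}\times C_k\times\mathbf{T}$. For a finite subgroup $F$ of $C_k\times\mathbf{T}$ and a homomorphism $f:C_{p^\infty}\to(C_k\times\mathbf{T})/F$, set $H_{F,f}:=q_F^{-1}(\mathrm{Graph}(f))$. Then $H_{F,f}$ is an infinite discrete subgroup of $G_{p,k}$, and every infinite discrete subgroup of $G_{p,k}$ is of the form $H_{F,f}$ for some such $F$ and $f$.
   Context: $\mathbf{T}$ is the circle group; $C_m\subset\mathbf{T}$ is the group of $m$-th roots of unity; $C_{p^\infty}=\bigcup_{\ell\ge1}C_{p^\ell}$ is the Prüfer $p$-group, with the discrete topology. $q_F:G_{p,k}\to G_{p,k}/(\{1\}\times F)=C_{p^\infty}\times(C_k\times\mathbf{T})/F$ is the quotient map, and $\mathrm{Graph}(f)=\{(w,f(w)):w\in C_{p^\infty}\}$. *)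

(* Defs.v *)
From HB Require Import structures.
From mathcomp Require Import all_boot all_order all_algebra.
From mathcomp Require Import complex.
From mathcomp Require Import boolp classical_sets cardinality reals.
Set Implicit Arguments. Unset Strict Implicit. Unset Printing Implicit Defensive.
Import Order.TTheory GRing.Theory Num.Theory.
Local Open Scope ring_scope.
Local Open Scope classical_set_scope.
Local Open Scope complex_scope.

Section Defs.
Variable R : realType.
Notation C := (R[i]).

Definition circle : set C := [set z | `|z| = 1].
Definition roots_unity (m : nat) : set C := [set z | z ^+ m = 1].
Definition pruefer (p : nat) : set C :=
  [set z | exists l : nat, (0 < l)%N /\ z ^+ (p ^ l) = 1].

Definition CkT (k : nat) : set (C * C) := roots_unity k `*` circle.
Definition Gpk (p k : nat) : set (C * (C * C)) := pruefer p `*` CkT k.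

Definition one2 : C * C := (1, 1).
Definition mul2 (x y : C * C) : C * C := (x.1 * y.1, x.2 * y.2).
Definition inv2 (x : C * C) : C * C := (x.1^-1, x.2^-1).
Definition one3 : C * (C * C) := (1, one2).
Definition mul3 (x y : C * (C * C)) : C * (C * C) := (x.1 * y.1, mul2 x.2 y.2).
Definition inv3 (x : C * (C * C)) : C * (C * C) := (x.1^-1, inv2 x.2).

Definition is_subgroup {T : Type} (one : T) (mul : T -> T -> T) (inv : T -> T)
    (S A : set T) : Prop :=
  A `<=` S /\ A one /\ (forall x y, A x -> A y -> A (mul x y)) /\
  (forall x, A x -> A (inv x)).

Definition coset (F : set (C * C)) (x : C * C) : set (C * C) :=
  [set mul2 x y | y in F].

(* f : C_{p^oo} -> (C_k x T)/F is a group homomorphism; elements of the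
   quotient are represented as cosets (subsets of C_k x T), and the product
   of cosets is the set-theoretic product. *)
Definition is_hom_quot (p k : nat) (F : set (C * C)) (f : C -> set (C * C)) : Prop :=
  (forall w, pruefer p w -> exists x, CkT k x /\ f w = coset F x) /\
  (forall w w', pruefer p w -> pruefer p w' ->
     f (w * w') = [set z | exists a b, f w a /\ f w' b /\ z = mul2 a b]).

(* H_{F,f} = q_F^{-1}(Graph f), where q_F(w,x) = (w, xF) *)
Definition HFf (p k : nat) (F : set (C * C)) (f : C -> set (C * C)) : set (C * (C * C)) :=
  [set h | pruefer p h.1 /\ CkT k h.2 /\ coset F h.2 = f h.1].

(* H is a discrete subset of G_{p,k}: the topology on G_{p,k} is the product
   of the discrete topology on C_{p^oo} and the subspace topologies from C on
   C_k and T; so H is discrete iff each h in H has a basic neighbourhood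
   meeting H only in h. *)
Definition discrete_in_G (H : set (C * (C * C))) : Prop :=
  forall h, H h -> exists e : R, 0 < e /\
    forall h', H h' -> h'.1 = h.1 ->
      `|h'.2.1 - h.2.1| < e%:C -> `|h'.2.2 - h.2.2| < e%:C -> h' = h.

End Defs.

(* Main.v *)
Require Import Defs.
From HB Require Import structures.
From mathcomp Require Import all_boot all_order all_algebra.
From mathcomp Require Import complex.
From mathcomp Require Import boolp classical_sets cardinality reals.
From mathcomp Require Import ring lra finmap.
Set Implicit Arguments. Unset Strict Implicit. Unset Printing Implicit Defensive.
Import Order.TTheory GRing.Theory Num.Theory.
Local Open Scope ring_scope.
Local Open Scope classical_set_scope.
Local Open Scope complex_scope.

Lemma unit_norm {R : realType} (n : nat) (z : R[i]) : (0 < n)%N -> z ^+ n = 1 -> `|z| = 1.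
Proof.
move=> n0 zn; have := congr1 (fun x => `|x|) zn; rewrite normrX normr1 => /eqP.
by rewrite pexpr_eq1 // => /eqP.
Qed.

Lemma norm1_neq0 {R : realType} (z : R[i]) : `|z| = 1 -> z != 0.
Proof. by move=> h; apply/eqP=> z0; move: h; rewrite z0 normr0 => /eqP; rewrite eq_sym oner_eq0. Qed.

Lemma roots_finite {R : realType} (n : nat) : (0 < n)%N -> finite_set [set z : R[i] | z ^+ n = 1].
Proof.
move=> n0; apply: contrapT => /infinite_set_fsetP/(_ n.+1) [B BA].
apply/negP; rewrite -ltnNge.
apply: leq_ltn_trans (max_unity_roots n0 _ (fset_uniq B)) _ => //.
apply/allP => x xB; apply/unity_rootP; exact: BA.
Qed.

Lemma exists_prim_p {R : realType} (p : nat) : prime p -> exists z : R[i], z ^+ p = 1 /\ z != 1.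
Proof.
move=> pp; have p1 := prime_gt1 pp.
have : size (\poly_(i < p) (1 : R[i])) != 1%N.
  by rewrite size_poly_eq ?oner_eq0 // neq_ltn p1 orbT.
move/closed_rootP => [z]; rewrite /root horner_poly => /eqP.
under eq_bigr do rewrite mul1r; move=> hz.
exists z; split.
  by apply/eqP; rewrite -subr_eq0 subrX1 hz mulr0.
apply/eqP => z1; move: hz; rewrite z1.
under eq_bigr do rewrite expr1n.
rewrite sumr_const card_ord => /eqP; rewrite pnatr_eq0 => /eqP p0.
by move: p1; rewrite p0.
Qed.


Lemma pruefer_infinite {R : realType} (p : nat) : prime p -> infinite_set (@pruefer R p).
Proof.
move=> pp; have p0 := prime_gt0 pp; have [zeta [zp z1]] := exists_prim_p (R := R) pp.
pose fix zs (l : nat) : R[i] := if l is l'.+1 then p.-root (zs l') else zeta.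
have zsE l : zs l ^+ (p ^ l) = zeta.
  elim: l => [|l IH] /=; first by rewrite expr1.
  by rewrite expnS exprM rootCK.
have zs1 l : zs l ^+ (p ^ l.+1) = 1 by rewrite expnSr exprM zsE.
have zinj : injective zs.
  move=> a b; wlog ab : a b / (a <= b)%N.
    move=> W; case/orP: (leq_total a b) => h; first exact: W.
    by move=> e; symmetry; apply: W.
  move=> eab; case: (ltngtP a b) ab => // ab _; exfalso.
  have : zs b ^+ (p ^ b) = 1.
    have /dvdnP [c ->] : (p ^ a.+1 %| p ^ b)%N by rewrite dvdn_Pexp2l // prime_gt1.
    by rewrite mulnC exprM -eab zs1 expr1n.
  by rewrite zsE => /eqP; rewrite (negbTE z1).
move=> fin; apply: infinite_nat.
have : finite_set (zs @` [set: nat]).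
  apply: sub_finite_set fin => _ [l _ <-]; exists l.+1; split => //.
rewrite (eq_finite_set (inj_card_eq _)) //.
by move=> a b _ _; apply: zinj.
Qed.


Definition nr {R : realType} (z : R[i]) : R := complex.Re `|z|.
Lemma normE {R : realType} (z : R[i]) : `|z| = (nr z)%:C.
Proof. by rewrite /nr normc_def. Qed.

Lemma min_pos {R : realType} (T : eqType) (S : set T) (phi : T -> R) :
  finite_set S -> (forall y, S y -> 0 < phi y) ->
  exists e, 0 < e /\ forall y, S y -> e <= phi y.
Proof.
case/finite_seqP => s ->; elim: s => [|a s IH] H.
  by exists 1; split => // y.
have [|e [e0 He]] := IH; first by move=> y ys; apply: H; rewrite /= inE ys orbT.
have a0 : 0 < phi a by apply: H; rewrite /= inE eqxx.
exists (Order.min (phi a) e); split; first by rewrite lt_min a0 e0.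
move=> y /=; rewrite inE => /orP [/eqP ->|ys]; first by rewrite ge_min lexx.
by rewrite ge_min He ?orbT.
Qed.


Definition nz2 {R : realType} (x : R[i] * R[i]) := x.1 != 0 /\ x.2 != 0.

Lemma mul2A {R : realType} (x y z : R[i] * R[i]) : mul2 x (mul2 y z) = mul2 (mul2 x y) z.
Proof. by rewrite /mul2 /= !mulrA. Qed.
Lemma mul2C {R : realType} (x y : R[i] * R[i]) : mul2 x y = mul2 y x.
Proof. by rewrite /mul2 /= mulrC [x.2 * _]mulrC. Qed.
Lemma mul2_1 {R : realType} (x : R[i] * R[i]) : mul2 x (one2 _) = x.
Proof. by case: x => a b; rewrite /mul2 /= !mulr1. Qed.
Lemma mul1_2 {R : realType} (x : R[i] * R[i]) : mul2 (one2 _) x = x.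
Proof. by rewrite mul2C mul2_1. Qed.
Lemma mul2V {R : realType} (x : R[i] * R[i]) : nz2 x -> mul2 x (inv2 x) = (one2 _).
Proof. by case: x => a b [/= a0 b0]; rewrite /mul2 /inv2 /= !mulfV. Qed.
Lemma mulV2 {R : realType} (x : R[i] * R[i]) : nz2 x -> mul2 (inv2 x) x = (one2 _).
Proof. by move=> h; rewrite mul2C mul2V. Qed.
Lemma inv2K {R : realType} (x : R[i] * R[i]) : inv2 (inv2 x) = x.
Proof. by case: x => a b; rewrite /inv2 /= !invrK. Qed.
Lemma inv2_1 {R : realType} : inv2 (@one2 R) = (one2 _).
Proof. by rewrite /inv2 /= invr1. Qed.
Lemma inv2M {R : realType} (x y : R[i] * R[i]) : inv2 (mul2 x y) = mul2 (inv2 x) (inv2 y).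
Proof. by rewrite /inv2 /mul2 /= !invfM. Qed.
Lemma mul2K {R : realType} (x y : R[i] * R[i]) : nz2 x -> mul2 (inv2 x) (mul2 x y) = y.
Proof. by move=> h; rewrite mul2A mulV2 // mul1_2. Qed.
Lemma mul2VK {R : realType} (x y : R[i] * R[i]) : nz2 x -> mul2 x (mul2 (inv2 x) y) = y.
Proof. by move=> h; rewrite mul2A mul2V // mul1_2. Qed.

Lemma CkT_norm {R : realType} k (x : R[i] * R[i]) : (0 < k)%N -> CkT k x ->
  `|x.1| = 1 /\ `|x.2| = 1.
Proof. by move=> k0 [h1 h2]; split => //; exact: unit_norm h1. Qed.
Lemma CkT_nz {R : realType} k (x : R[i] * R[i]) : (0 < k)%N -> CkT k x -> nz2 x.
Proof. by move=> k0 /(CkT_norm k0) [h1 h2]; split; apply: norm1_neq0. Qed.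
Lemma CkT1 {R : realType} k : CkT k (@one2 R).
Proof. by rewrite /CkT /setX /one2 /roots_unity /circle /= expr1n normr1. Qed.
Lemma CkTM {R : realType} k (x y : R[i] * R[i]) : CkT k x -> CkT k y -> CkT k (mul2 x y).
Proof.
case=> [h1 h2] [h3 h4]; split; rewrite /mul2 /=.
  by rewrite /roots_unity /= exprMn h1 h3 mulr1.
by rewrite /circle /= normrM h2 h4 mulr1.
Qed.
Lemma CkTV {R : realType} k (x : R[i] * R[i]) : CkT k x -> CkT k (inv2 x).
Proof.
case=> [h1 h2]; split; rewrite /inv2 /=.
  by rewrite /roots_unity /= exprVn h1 invr1.
by rewrite /circle /= normfV h2 invr1.
Qed.

Lemma pr_nz {R : realType} p (w : R[i]) : prime p -> pruefer p w -> w != 0.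
Proof.
move=> pp [l [l0 h]]; apply/eqP => w0; move: h; rewrite w0.
have : (0 < p ^ l)%N by rewrite expn_gt0 prime_gt0.
case: (p ^ l)%N => // n _; rewrite expr0n /= => /eqP; rewrite eq_sym oner_eq0. by [].
Qed.
Lemma pr1 {R : realType} p : pruefer p (1 : R[i]).
Proof. by exists 1%N; rewrite expr1n. Qed.
Lemma prM {R : realType} p (w w' : R[i]) : pruefer p w -> pruefer p w' -> pruefer p (w * w').
Proof.
move=> [l [l0 h]] [l' [l0' h']]; exists (l + l')%N; split; first by rewrite addn_gt0 l0.
by rewrite exprMn expnD exprM h expr1n mulnC exprM h' expr1n mulr1.
Qed.
Lemma prV {R : realType} p (w : R[i]) : pruefer p w -> pruefer p w^-1.
Proof. by move=> [l [l0 h]]; exists l; rewrite exprVn h invr1. Qed.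

Definition prodset {R : realType} (A B : set (R[i] * R[i])) :=
  [set z | exists a b, A a /\ B b /\ z = mul2 a b].

Lemma coset_mem {R : realType} (F : set (R[i] * R[i])) a : F (one2 _) -> coset F a a.
Proof. by move=> F1; exists (one2 _) => //; rewrite mul2_1. Qed.

Lemma coset1 {R : realType} (F : set (R[i] * R[i])) : coset F (one2 _) = F.
Proof.
apply/seteqP; split => z /=; first by case=> y Fy <-; rewrite mul1_2.
by move=> Fz; exists z => //; rewrite mul1_2.
Qed.

Lemma cosetE {R : realType} k (F : set (R[i] * R[i])) a b : (0 < k)%N ->
  is_subgroup (one2 R) (@mul2 R) (@inv2 R) (CkT k) F -> CkT k a -> CkT k b ->
  (coset F a = coset F b <-> F (mul2 (inv2 a) b)).
Proof.
move=> k0 [FS [F1 [FM FI]]] Ca Cb.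
have nza := CkT_nz k0 Ca; have nzb := CkT_nz k0 Cb.
split.
  move=> e; have : coset F a b by rewrite e; apply: coset_mem.
  by case=> y Fy <-; rewrite mul2K.
move=> Fy; set y0 := mul2 (inv2 a) b in Fy.
have by0 : b = mul2 a y0 by rewrite /y0 mul2VK.
have nzy0 := CkT_nz k0 (FS _ Fy).
apply/seteqP; split => z /= [y Fy' <-].
  exists (mul2 (inv2 y0) y); first by apply: FM => //; apply: FI.
  by rewrite by0 -mul2A mul2VK.
by exists (mul2 y0 y); [apply: FM | rewrite by0 mul2A].
Qed.

Lemma coset_prod {R : realType} k (F : set (R[i] * R[i])) a b :
  is_subgroup (one2 R) (@mul2 R) (@inv2 R) (CkT k) F ->
  prodset (coset F a) (coset F b) = coset F (mul2 a b).
Proof.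
move=> [FS [F1 [FM FI]]].
apply/seteqP; split => z /=.
  case=> _ [_ [[y1 Fy1 <-] [[y2 Fy2 <-] ->]]].
  exists (mul2 y1 y2); first exact: FM.
  by rewrite !mul2A; congr mul2; rewrite -!mul2A [mul2 y1 b]mul2C.
case=> y Fy <-; exists (mul2 a y), b; split; first by exists y.
split; first exact: coset_mem.
by rewrite -!mul2A [mul2 b y]mul2C.
Qed.

Lemma norm_i {R : realType} : `|'i| = 1 :> R[i].
Proof.
apply: (@unit_norm R 4) => //.
by rewrite (exprM _ 2 2) sqr_i sqrrN expr1n.
Qed.

Lemma norm_realC {R : realType} (a : R) : `|a%:C| = `|a|%:C.
Proof. by rewrite normc_def /= expr0n addr0 sqrtr_sqr. Qed.

Lemma Re_le1 {R : realType} (z : R[i]) : `|z| = 1 -> `|complex.Re z| <= 1.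
Proof. by move=> h; rewrite -lecR; have := normc_ge_Re z; rewrite h. Qed.

Lemma Im_le1 {R : realType} (z : R[i]) : `|z| = 1 -> `|complex.Im z| <= 1.
Proof.
move=> h; rewrite -normrN -ReiNIm; apply: Re_le1.
by rewrite normrM h norm_i mulr1.
Qed.

Lemma norm_ReIm {R : realType} (z : R[i]) :
  `|z| <= (`|complex.Re z| + `|complex.Im z|)%:C.
Proof.
rewrite {1}[z]complexE rmorphD /=.
apply: le_trans (ler_normD _ _) _.
by rewrite normrM norm_i mul1r !norm_realC.
Qed.

Definition cell {R : realType} (d t : R) : nat := Num.truncn ((t + 1) / d).

Lemma cell_lt {R : realType} (d t : R) : 0 < d -> `|t| <= 1 ->
  (cell d t < (Num.truncn (2 / d)).+1)%N.
Proof.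
move=> d0 ht; rewrite ltnS /cell; apply: le_truncn.
rewrite ler_pM2r ?invr_gt0 //.
by move: ht; rewrite ler_norml => /andP [_ h]; lra.
Qed.

Lemma cell_inj {R : realType} (d s t : R) : 0 < d -> `|s| <= 1 -> `|t| <= 1 ->
  cell d s = cell d t -> `|s - t| < d.
Proof.
move=> d0 hs ht; rewrite /cell.
have A0 : 0 <= (s + 1) / d.
  by apply: divr_ge0 (ltW d0); move: hs; rewrite ler_norml => /andP [h _]; lra.
have B0 : 0 <= (t + 1) / d.
  by apply: divr_ge0 (ltW d0); move: ht; rewrite ler_norml => /andP [h _]; lra.
move: (truncn_itv A0) (truncn_itv B0).
set A := (s + 1) / d; set B := (t + 1) / d.
move=> /andP [a1 a2] /andP [b1 b2] e; rewrite e in a1 a2.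
have -> : s - t = (A - B) * d by rewrite /A /B; field; rewrite lt0r_neq0.
rewrite normrM (gtr0_norm d0) -{2}[d]mul1r ltr_pM2r // ltr_norml.
move: a2 b2; rewrite -!natr1 => a2 b2.
apply/andP; split; lra.
Qed.

Lemma sep_finite {R : realType} (S : set (R[i] * R[i])) (e : R) : 0 < e ->
  (forall x, S x -> `|x.1| = 1 /\ `|x.2| = 1) ->
  (forall x y, S x -> S y -> `|x.1 - y.1| < e%:C -> `|x.2 - y.2| < e%:C -> x = y) ->
  finite_set S.
Proof.
move=> e0 hS sep.
pose d := e / 2; have d0 : 0 < d by rewrite /d divr_gt0.
pose N := (Num.truncn (2 / d)).+1.
pose g (x : R[i] * R[i]) := ((cell d (complex.Re x.1), cell d (complex.Im x.1)),
                              (cell d (complex.Re x.2), cell d (complex.Im x.2))).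
have close (z w : R[i]) : `|z| = 1 -> `|w| = 1 ->
    cell d (complex.Re z) = cell d (complex.Re w) ->
    cell d (complex.Im z) = cell d (complex.Im w) -> `|z - w| < e%:C.
  move=> nz nw c1 c2; apply: le_lt_trans (norm_ReIm _) _; rewrite ltcR.
  have h1 := cell_inj d0 (Re_le1 nz) (Re_le1 nw) c1.
  have h2 := cell_inj d0 (Im_le1 nz) (Im_le1 nw) c2.
  have -> : e = d + d by rewrite /d; field.
  by rewrite raddfB /= [complex.Im (z - w)]raddfB /=; apply: ltrD.
have ginj : {in S &, injective g}.
  move=> x y Sx Sy [c1 c2 c3 c4]; rewrite in_setE in Sx; rewrite in_setE in Sy.
  have [nx1 nx2] := hS x Sx; have [ny1 ny2] := hS y Sy.
  by apply: sep => //; apply: close.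
rewrite -(eq_finite_set (inj_card_eq ginj)).
apply: (@sub_finite_set _ _ ((`I_N `*` `I_N) `*` (`I_N `*` `I_N))).
  move=> _ [x Sx <-]; have [nx1 nx2] := hS x Sx.
  by split; split; rewrite /= /N; apply: cell_lt => //;
     [exact: Re_le1 | exact: Im_le1 | exact: Re_le1 | exact: Im_le1].
by apply: finite_setX; apply: finite_setX; apply: finite_II.
Qed.

Lemma nr_gt0 {R : realType} (z : R[i]) : z != 0 -> 0 < nr z.
Proof. by move=> nz; rewrite -ltcR -normE normr_gt0. Qed.

Lemma nr_lt {R : realType} (z : R[i]) e : `|z| < e%:C -> nr z < e.
Proof. by rewrite [X in X < _]normE ltcR. Qed.

Lemma norm_shift {R : realType} (a b : R[i]) : `|a| = 1 -> `|b - a| = `|a^-1 * b - 1|.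
Proof.
move=> na; have a0 := norm1_neq0 na.
have -> : a^-1 * b - 1 = a^-1 * (b - a) by rewrite mulrBr mulVf.
by rewrite normrM normfV na invr1 mul1r.
Qed.

Lemma part1 {R : realType} p k (hp : prime p) (hk : (0 < k)%N)
  (F : set (R[i] * R[i])) (f : R[i] -> set (R[i] * R[i])) :
      is_subgroup (@one2 R) (@mul2 R) (@inv2 R) (@CkT R k) F ->
      finite_set F ->
      is_hom_quot p k F f ->
      is_subgroup (@one3 R) (@mul3 R) (@inv3 R) (@Gpk R p k) (HFf p k F f) /\
      infinite_set (HFf p k F f) /\
      discrete_in_G (HFf p k F f).
Proof.
move=> hF finF [hf1 hf2']; have [FS [F1 [FM FI]]] := hF.
have hf2 : forall w w', pruefer p w -> pruefer p w' -> f (w * w') = prodset (f w) (f w') := hf2'.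
have f1 : f 1 = F.
  have [x0 [Cx0 e0]] := hf1 1 (pr1 p).
  have := hf2 1 1 (pr1 p) (pr1 p); rewrite mulr1 e0 (coset_prod _ _ hF) => e.
  have Fx0 : F x0.
    move/(cosetE hk hF Cx0 (CkTM Cx0 Cx0)): e; rewrite mul2K //; exact: CkT_nz hk Cx0.
  transitivity (coset F (one2 R)); last exact: coset1.
  apply/(cosetE hk hF Cx0 (CkT1 k)); rewrite mul2_1; exact: FI.
split; last split.
- split; first by move=> h [ph [Ch _]].
  split; first by split; [exact: pr1 | split; [exact: CkT1 | by rewrite coset1 f1]].
  split.
    move=> h h' [ph [Ch eh]] [ph' [Ch' eh']]; split; first exact: prM.
    split; first exact: CkTM.
    by rewrite /= hf2 // -eh -eh' (coset_prod _ _ hF).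
  move=> h [ph [Ch eh]]; split; first exact: prV.
  split; first exact: CkTV.
  have [z [Cz ez]] := hf1 _ (prV ph).
  have := hf2 _ _ ph (prV ph); rewrite mulfV ?(pr_nz hp ph) // f1 -eh ez (coset_prod _ _ hF) => e.
  have e' : coset F (one2 R) = coset F (mul2 h.2 z) by rewrite coset1.
  move/(cosetE hk hF (CkT1 k) (CkTM Ch Cz)): e'; rewrite inv2_1 mul1_2 => Fhz.
  rewrite /inv3 /=; apply/(cosetE hk hF (CkTV Ch) Cz); by rewrite inv2K.
- have sub : pruefer p `<=` fst @` HFf p k F f.
    move=> w pw; have [x [Cx hx]] := hf1 w pw; exists (w, x) => //.
  move=> fin; apply: (pruefer_infinite (R := R) hp); apply: sub_finite_set sub _.
  exact: finite_image.
- move=> h [ph [Ch eh]].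
  have [|e [e0 He]] := @min_pos R _ (F `\` [set one2 R])
     (fun y => Order.max (nr (y.1 - 1)) (nr (y.2 - 1))) (@finite_setD _ F [set one2 R] finF) _.
    move=> [y1 y2] [Fy ny]; rewrite lt_max.
    case: (eqVneq y1 1) => [e1|n1]; last by rewrite nr_gt0 // subr_eq0.
    case: (eqVneq y2 1) => [e2|n2]; last by rewrite orbC nr_gt0 // subr_eq0.
    by exfalso; apply: ny; rewrite e1 e2.
  exists e; split => // h' [ph' [Ch' eh']] e1 d1 d2.
  have hy : F (mul2 (inv2 h.2) h'.2) by apply/(cosetE hk hF Ch Ch'); rewrite eh eh' e1.
  set y := mul2 (inv2 h.2) h'.2 in hy.
  case: (pselect (y = one2 R)) => [yo|yn].
    have : mul2 h.2 y = h'.2 by rewrite /y mul2VK //; exact: CkT_nz hk Ch.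
    rewrite yo mul2_1 => E2.
    by move: e1 E2; case: h' {ph' Ch' eh' d1 d2 y hy yo} => a' b' /= -> <-; case: h {ph Ch eh}.
  have := He y (conj hy yn); rewrite le_max.
  have [n1 n2] := CkT_norm hk Ch.
  move: d1 d2; rewrite (@norm_shift R h.2.1 h'.2.1 n1) (@norm_shift R h.2.2 h'.2.2 n2).
  move=> /nr_lt d1 /nr_lt d2.
  by move: d1 d2; rewrite /y /mul2 /inv2 /= => d1 d2; rewrite !leNgt d1 d2.
Qed.

Lemma part2 {R : realType} p k (hp : prime p) (hk : (0 < k)%N)
  (H : set (R[i] * (R[i] * R[i]))) :
      is_subgroup (@one3 R) (@mul3 R) (@inv3 R) (@Gpk R p k) H ->
      infinite_set H ->
      discrete_in_G H ->
      exists (F : set (R[i] * R[i])) (f : R[i] -> set (R[i] * R[i])),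
        is_subgroup (@one2 R) (@mul2 R) (@inv2 R) (@CkT R k) F /\
        finite_set F /\
        is_hom_quot p k F f /\
        H = HFf p k F f.
Proof.
move=> [HS [H1 [HM HI]]] Hinf Hdisc.
have Hpr h : H h -> pruefer p h.1 by move/HS => [].
have HC h : H h -> CkT k h.2 by move/HS => [].
pose F := [set x | H (1, x)].
pose f := fun w => [set x | H (w, x)].
have hF : is_subgroup (one2 R) (@mul2 R) (@inv2 R) (CkT k) F.
  split; first by move=> x /HC.
  split; first exact: H1.
  split; first by move=> x y Fx Fy; have := HM _ _ Fx Fy; rewrite /mul3 /= mulr1.
  by move=> x Fx; have := HI _ Fx; rewrite /inv3 /= invr1.
have fiber w a : H (w, a) -> f w = coset F a.
  move=> Hwa; have w0 := pr_nz hp (Hpr _ Hwa); have Ca := HC _ Hwa.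
  apply/seteqP; split => x /=.
    move=> Hwx; exists (mul2 (inv2 a) x); last by rewrite mul2VK //; exact: CkT_nz hk Ca.
    by have := HM _ _ (HI _ Hwa) Hwx; rewrite /mul3 /inv3 /= mulVf.
  by case=> y Fy <-; have := HM _ _ Hwa Fy; rewrite /mul3 /= mulr1.
have Hpow u x n : H (u, x) -> H (u ^+ n, (x.1 ^+ n, x.2 ^+ n)).
  move=> Hux; elim: n => [|n IH]; first by rewrite !expr0; exact: H1.
  by have := HM _ _ Hux IH; rewrite /mul3 /mul2 /= -!exprS.
have [FS [F1 [FM FI]]] := hF.
have finF : finite_set F.
  have [e [e0 He]] := Hdisc (one3 R) H1.
  apply: (sep_finite e0); first by move=> x Fx; exact: CkT_norm hk (FS _ Fx).
  move=> x y Fx Fy d1 d2.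
  have nzy := CkT_nz hk (FS _ Fy); have [ny1 ny2] := CkT_norm hk (FS _ Fy).
  have Fz : F (mul2 (inv2 y) x) by apply: FM => //; exact: FI.
  have := He (1, mul2 (inv2 y) x) Fz erefl.
  rewrite /= -(@norm_shift R y.1 x.1 ny1) -(@norm_shift R y.2 x.2 ny2) => /(_ d1 d2) /(congr1 snd) /= /(congr1 (mul2 y)).
  by rewrite mul2VK // mul2_1.
have Hall w : pruefer p w -> exists x, H (w, x).
  case=> l [l0 hw].
  have [u [x [Hux nu]]] : exists u x, H (u, x) /\ u ^+ (p ^ l) != 1.
    apply: contrapT => hno; apply: Hinf.
    pose g w := xget (one2 R) (fun x => H (w, x)).
    apply: (@sub_finite_set _ _
      ((fun wy => (wy.1, mul2 (g wy.1) wy.2)) @` ([set z : R[i] | z ^+ (p ^ l) = 1] `*` F))).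
      case=> w' x' Hwx.
      have Hg : H (w', g w') by apply: (@xgetI _ _ (fun x => H (w', x)) x').
      have : f w' x' by [].
      rewrite (fiber _ _ Hg) => -[y Fy ey].
      exists (w', y) => //=; last by rewrite ey.
      split => //=; apply: contrapT => nw; apply: hno; exists w', x'; split => //.
      by apply/eqP.
    apply: finite_image; apply: finite_setX => //.
    by apply: roots_finite; rewrite expn_gt0 prime_gt0.
  have [m [m0 hu]] := Hpr _ Hux.
  have pm0 : (0 < p ^ m)%N by rewrite expn_gt0 prime_gt0.
  have [d pd dd] := prim_order_exists pm0 hu.
  have [j jm dj] := (dvdn_pfactor _ _ hp) dd.
  have lj : (l < j)%N.
    rewrite ltnNge; apply/negP => jl; move: nu; rewrite -(prim_order_dvd pd) dj.
    by rewrite dvdn_exp2l.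
  have wd : w ^+ d = 1.
    have /dvdnP [c ->] : (p ^ l %| d)%N by rewrite dj dvdn_exp2l // ltnW.
    by rewrite mulnC exprM hw expr1n.
  have [i ->] := prim_rootP pd wd.
  by eexists; apply: Hpow Hux.
exists F, f; split => //; split => //; split.
  split.
    move=> w pw; have [x Hwx] := Hall w pw; exists x; split; first exact: HC _ Hwx.
    exact: fiber.
  move=> w w' pw pw'.
  have [a Ha] := Hall w pw; have [b Hb] := Hall w' pw'.
  have Hab : H (w * w', mul2 a b) by exact: HM _ _ Ha Hb.
  rewrite (fiber _ _ Hab) (fiber _ _ Ha) (fiber _ _ Hb).
  by rewrite -(coset_prod _ _ hF).
apply/seteqP; split => -[w x] /=.
  move=> Hwx; split; first exact: Hpr _ Hwx.
  split; first exact: HC _ Hwx.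
  by rewrite (fiber _ _ Hwx).
case=> /= pw [Cx e].
have : coset F x x by apply: coset_mem.
by rewrite e.
Qed.

Theorem proposition6 (R : realType) (p k : nat) (hp : prime p) (hk : (0 < k)%N) :
  (forall (F : set (R[i] * R[i])) (f : R[i] -> set (R[i] * R[i])),
      is_subgroup (@one2 R) (@mul2 R) (@inv2 R) (@CkT R k) F ->
      finite_set F ->
      is_hom_quot p k F f ->
      is_subgroup (@one3 R) (@mul3 R) (@inv3 R) (@Gpk R p k) (HFf p k F f) /\
      infinite_set (HFf p k F f) /\
      discrete_in_G (HFf p k F f)) /\
  (forall H : set (R[i] * (R[i] * R[i])),
      is_subgroup (@one3 R) (@mul3 R) (@inv3 R) (@Gpk R p k) H ->
      infinite_set H ->
      discrete_in_G H ->
      exists (F : set (R[i] * R[i])) (f : R[i] -> set (R[i] * R[i])),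
        is_subgroup (@one2 R) (@mul2 R) (@inv2 R) (@CkT R k) F /\
        finite_set F /\
        is_hom_quot p k F f /\
        H = HFf p k F f).
Proof.
split; [move=> F f; exact: part1 | move=> H; exact: part2].
Qed.
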